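(* Let $K$, $c$, $s$ be as in the context, let $n\ge1$ and let $\gamma_1,\ldots,\gamma_n,\beta_1,\ldots,\beta_n$ be integers. For $i=1,\ldots,n$ let $B_i=\{j\in\{1,\ldots,n\}:\gamma_j=\gamma_i\}$, and let $\gamma_0=\max\{|\gamma_1|,\ldots,|\gamma_n|\}$. Let $F=(c^{s^{\gamma_1}})^{\beta_1}(c^{s^{\gamma_2}})^{\beta_2}\cdots(c^{s^{\gamma_n}})^{\beta_n}$, an element of the base group $K^{\langle s\rangle}$, regarded as a function $\langle s\rangle\to K$. If $\mu$ is an integer with $|\mu|>3\gamma_0$ and $\sum_{j\in B_i}\beta_j=0$ for $i=1,\ldots,n$, then $F(s^{\mu})=1$.
   Context: Notation: $x^y=yxy^{-1}$. For groups $A,B$, the wreath product $A\,\mathrm{Wr}\,B$ is the semidirect product $A^B\rtimes B$, where $A^B$ is the group of all functions $B\to A$ with pointwise multiplication and $B$ acts by $(bf)(x)=f(xb)$, written $f^b=bfb^{-1}$; in particular $(c^{s^{\gamma}})(s^k)=c(s^{k+\gamma})$. $H$ is a group generated by a countable set $\{a^{(1)},a^{(2)},\ldots\}$. Let $Z=\langle z\rangle$ be infinite cyclic and $b^{(i)}\in H^Z$ with $b^{(i)}(z^k)=a^{(i)}$ if $k>0$ and $1$ otherwise; $K=\langle z,b^{(i)}\ (i\in\mathbb{N})\rangle\le H\,\mathrm{Wr}\,Z$. Let $\langle s\rangle$ be infinite cyclic and $c\in K^{\langle s\rangle}$ with $c(s)=z$, $c(s^{2^i})=b^{(i)}$ for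 $i>0$, $c(s^k)=1$ otherwise; everything takes place in $K\,\mathrm{Wr}\,\langle s\rangle$. *)

(* Defs.v *)
From mathcomp Require Import all_boot all_order all_algebra.
Import GRing.Theory Num.Theory.
Set Implicit Arguments. Unset Strict Implicit. Unset Printing Implicit Defensive.

Definition is_group (G : Type) (mul : G -> G -> G) (one : G) (inv : G -> G) :=
  [/\ (forall x y z, mul x (mul y z) = mul (mul x y) z),
      (forall x, mul one x = x), (forall x, mul x one = x),
      (forall x, mul (inv x) x = one) & (forall x, mul x (inv x) = one)].

Definition zpow (G : Type) (mul : G -> G -> G) (one : G) (inv : G -> G)
  (x : G) (e : int) : G :=
  match e with
  | Posz m => iter m (mul x) one
  | Negz m => inv (iter m.+1 (mul x) one)
  end.

Definition gen_by (G : Type) (mul : G -> G -> G) (one : G) (inv : G -> G)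
  (a : nat -> G) :=
  forall h : G, exists l : seq (nat * bool),
    all (fun p => 0 < p.1)%N l /\
    h = foldr (fun p acc => mul (if p.2 then a p.1 else inv (a p.1)) acc) one l.

Section Wreath.
Variables (H : Type) (mulH : H -> H -> H) (oneH : H) (invH : H -> H).

(* H Wr Z = H^Z ⋊ Z, Z = <z>.  The pair (f, m) stands for f * z^m, where
   f : Z -> H is identified with int -> H via z^k |-> k.  The action is
   (z^m f z^-m)(z^k) = f(z^(k+m)), so
   (f z^m)(g z^n) = (f . (z^m g z^-m)) z^(m+n). *)
Definition WrZ := ((int -> H) * int)%type.
Definition wmul (x y : WrZ) : WrZ :=
  (fun k => mulH (x.1 k) (y.1 (k + x.2)%R), (x.2 + y.2)%R).
Definition wone : WrZ := (fun _ => oneH, 0%R).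
Definition winv (x : WrZ) : WrZ :=
  (fun k => invH (x.1 (k - x.2)%R), (- x.2)%R).

Variable a : nat -> H.
Definition zgen : WrZ := (fun _ => oneH, 1%R).
Definition bgen (i : nat) : WrZ :=
  (fun k => if (0 < k)%R then a i else oneH, 0%R).

(* c : <s> -> K (s^k identified with k):
   c(s) = z, c(s^(2^i)) = b^(i) for i > 0, c(s^k) = 1 otherwise. *)
Definition cfun (k : int) : WrZ :=
  if k == 1%R then zgen else
  match k with
  | Posz m => if (1 < m)%N && (m == 2 ^ trunc_log 2 m)%N
              then bgen (trunc_log 2 m) else wone
  | Negz _ => wone
  end.

Definition bmul (f g : int -> WrZ) : int -> WrZ := fun k => wmul (f k) (g k).
Definition bone : int -> WrZ := fun _ => wone.
Definition binv (f : int -> WrZ) : int -> WrZ := fun k => winv (f k).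
Definition bconj (f : int -> WrZ) (g : int) : int -> WrZ := fun k => f (k + g)%R.

Definition Fprod (n : nat) (gam bet : nat -> int) : int -> WrZ :=
  foldr bmul bone
    [seq zpow bmul bone binv (bconj cfun (gam j)) (bet j) | j <- iota 1 n].
End Wreath.

(* Main.v *)
Require Import Defs.
From mathcomp Require Import all_boot all_order all_algebra.
Import GRing.Theory Num.Theory.
From mathcomp Require Import zify.
From Stdlib Require Import FunctionalExtensionality.

Section Grp.
Set Implicit Arguments.
Variables (G : Type) (mul : G -> G -> G) (one : G) (inv : G -> G).
Hypothesis hG : is_group mul one inv.

Lemma g_assoc x y z : mul x (mul y z) = mul (mul x y) z.
Proof. by case: hG. Qed.
Lemma g_1l x : mul one x = x. Proof. by case: hG. Qed.
Lemma g_1r x : mul x one = x. Proof. by case: hG. Qed.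
Lemma g_Vl x : mul (inv x) x = one. Proof. by case: hG. Qed.
Lemma g_Vr x : mul x (inv x) = one. Proof. by case: hG. Qed.

Lemma g_inv_uniq x y : mul x y = one -> x = inv y.
Proof.
move=> h. by rewrite -[x]g_1r -(g_Vr y) g_assoc h g_1l.
Qed.

Lemma g_invM x y : inv (mul x y) = mul (inv y) (inv x).
Proof.
symmetry; apply: g_inv_uniq.
by rewrite -g_assoc (g_assoc (inv x)) g_Vl g_1l g_Vl.
Qed.

Lemma iterSr x m : iter m.+1 (mul x) one = mul (iter m (mul x) one) x.
Proof.
elim: m => [|m IH]; first by rewrite /= g_1r g_1l.
by rewrite iterS IH g_assoc -IH.
Qed.

Notation zp := (zpow mul one inv).

Lemma zpowS x e : zp x (e + 1) = mul x (zp x e).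
Proof.
case: e => m.
  by have -> : (Posz m + 1 = Posz m.+1)%R by lia.
case: m => [|m].
  have -> : (Negz 0 + 1 = Posz 0)%R by lia.
  by rewrite /= g_1r g_Vr.
have -> : (Negz m.+1 + 1 = Negz m)%R by lia.
rewrite /=.
by rewrite -/(iter m.+1 (mul x) one) -/(iter m.+2 (mul x) one) (iterSr x m.+1) g_invM g_assoc g_Vr g_1l.
Qed.

Lemma zpowSm x e : zp x (e - 1) = mul (inv x) (zp x e).
Proof.
have -> : zp x e = zp x ((e - 1) + 1) by rewrite subrK.
by rewrite zpowS g_assoc g_Vl g_1l.
Qed.

Lemma zpowD x e1 e2 : zp x (e1 + e2) = mul (zp x e1) (zp x e2).
Proof.
case: e1 => m.
  elim: m => [|m IH]; first by rewrite add0r /= g_1l.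
  have -> : (Posz m.+1 + e2 = (Posz m + e2) + 1)%R by lia.
  rewrite zpowS IH g_assoc.
  have -> : Posz m.+1 = (Posz m + 1)%R by lia.
  by rewrite zpowS.
elim: m => [|m IH].
  have -> : (Negz 0 + e2 = 0 + e2 - 1)%R by lia.
  by rewrite zpowSm add0r /= g_1r.
have -> : (Negz m.+1 + e2 = (Negz m + e2) - 1)%R by lia.
have -> : Negz m.+1 = (Negz m - 1)%R by lia.
by rewrite !zpowSm IH g_assoc.
Qed.

Lemma zpow1 e : zp one e = one.
Proof.
have h m : iter m (mul one) one = one by elim: m => //= m ->; rewrite g_1l.
case: e => m /=; first exact: h.
by rewrite g_1l h; symmetry; rewrite -{1}(g_Vl one) g_1r.
Qed.

Lemma zpow0 x : zp x 0 = one. Proof. by []. Qed.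
End Grp.

Section W.
Variables (H : Type) (mulH : H -> H -> H) (oneH : H) (invH : H -> H).
Hypothesis hH : is_group mulH oneH invH.

Lemma W_group : is_group (wmul mulH) (wone oneH) (winv invH).
Proof.
split.
- move=> [x1 x2] [y1 y2] [z1 z2]; rewrite /wmul /=; f_equal; last by rewrite addrA.
  by apply: functional_extensionality => k; rewrite (g_assoc hH) addrA.
- move=> [x1 x2]; rewrite /wmul /=; f_equal; last by rewrite add0r.
  by apply: functional_extensionality => k; rewrite (g_1l hH) addr0.
- move=> [x1 x2]; rewrite /wmul /=; f_equal; last by rewrite addr0.
  by apply: functional_extensionality => k; rewrite (g_1r hH).
- move=> [x1 x2]; rewrite /wmul /wone /=; f_equal; last by rewrite addNr.
  by apply: functional_extensionality => k; rewrite (g_Vl hH).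
- move=> [x1 x2]; rewrite /wmul /wone /=; f_equal; last by rewrite addrN.
  by apply: functional_extensionality => k; rewrite addrK (g_Vr hH).
Qed.

Lemma zpow_pt (f : int -> WrZ H) e k :
  zpow (bmul mulH) (bone oneH) (binv invH) f e k =
  zpow (wmul mulH) (wone oneH) (winv invH) (f k) e.
Proof.
have h m : iter m (bmul mulH f) (bone oneH) k = iter m (wmul mulH (f k)) (wone oneH).
  by elim: m => //= m <-.
by case: e => m; [exact: h | exact: (congr1 (winv invH) (h m.+1))].
Qed.

Lemma foldr_pt (l : seq (int -> WrZ H)) k :
  foldr (bmul mulH) (bone oneH) l k = foldr (wmul mulH) (wone oneH) [seq f k | f <- l].
Proof. by elim: l => //= f l <-. Qed.

Definition special (k : int) : bool :=
  (k == 1%R) || (match k with Posz m => (1 < m)%N && (m == 2 ^ trunc_log 2 m)%N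
                 | Negz _ => false end).

Lemma cfun_wone a k : ~~ special k -> cfun oneH a k = wone oneH.
Proof.
rewrite /special /cfun negb_or => /andP[/negbTE -> h].
by case: k h => // m /negbTE ->.
Qed.

Lemma special_pow k : special k -> exists e, k = Posz (2 ^ e).
Proof.
rewrite /special => /orP[/eqP -> | ]; first by exists 0%N.
by case: k => // m /andP[_ /eqP ->]; eexists.
Qed.

Lemma special_uniq (mu g1 g2 : int) (g0 : nat) :
  (3 * g0 < `|mu|)%N -> (`|g1| <= g0)%N -> (`|g2| <= g0)%N ->
  special (mu + g1) -> special (mu + g2) -> g1 = g2.
Proof.
move=> hmu h1 h2 /special_pow [a ea] /special_pow [b eb].
have [hab|hab|hab] := ltngtP a b.
- have : (2 * 2 ^ a <= 2 ^ b)%N by rewrite -expnS leq_pexp2l.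
  lia.
- have : (2 * 2 ^ b <= 2 ^ a)%N by rewrite -expnS leq_pexp2l.
  lia.
- subst b; lia.
Qed.

Lemma prod_eq a (mu : int) (gam bet : nat -> int) j0 (s : seq nat) :
  (forall j, j \in s -> gam j != gam j0 -> ~~ special (mu + gam j)) ->
  foldr (wmul mulH) (wone oneH)
    [seq zpow (wmul mulH) (wone oneH) (winv invH) (cfun oneH a (mu + gam j)) (bet j) | j <- s]
  = zpow (wmul mulH) (wone oneH) (winv invH) (cfun oneH a (mu + gam j0))
      (\sum_(j <- s | gam j == gam j0) bet j)%R.
Proof.
have hW := W_group.
elim: s => [|j s IH] hs; first by rewrite big_nil.
rewrite /= big_cons IH; last by move=> i hi; apply: hs; rewrite inE hi orbT.
case: eqP => [-> | /eqP hne].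
  by rewrite (zpowD hW).
rewrite cfun_wone; last by apply: hs; rewrite ?inE ?eqxx.
by rewrite (zpow1 hW) (g_1l hW).
Qed.

End W.

Theorem lemma3 (H : Type) (mulH : H -> H -> H) (oneH : H) (invH : H -> H)
  (a : nat -> H) (n : nat) (gam bet : nat -> int) (mu : int) :
  is_group mulH oneH invH ->
  gen_by mulH oneH invH a ->
  (1 <= n)%N ->
  (3 * \max_(1 <= i < n.+1) `|gam i|%N < `|mu|%N)%N ->
  (forall i, (1 <= i <= n)%N ->
     (\sum_(1 <= j < n.+1 | gam j == gam i) bet j)%R = 0%R) ->
  Fprod mulH oneH invH a n gam bet mu = wone oneH.
Proof.
move=> hH _ hn hmu hsum.
set g0 := \max_(1 <= i < n.+1) `|gam i|%N in hmu.
have hI : index_iota 1 n.+1 = iota 1 n by rewrite /index_iota subSS subn0.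
have hb j : j \in iota 1 n -> (`|gam j| <= g0)%N.
  move=> hj; rewrite /g0; apply: (@leq_bigmax_seq _ _ xpredT (fun i => `|gam i|%N)) => //; by rewrite hI.
rewrite /Fprod foldr_pt -map_comp.
rewrite (eq_map (fun j => zpow_pt mulH oneH invH (bconj (cfun oneH a) (gam j)) (bet j) mu)) /=.
have [j0 hj0 hsp] : exists2 j0, j0 \in iota 1 n &
    forall j, j \in iota 1 n -> gam j != gam j0 -> ~~ special (mu + gam j).
  case: (boolP (has (fun j => special (mu + gam j)) (iota 1 n))).
    move=> /hasP [j0 hj0 hs0]; exists j0 => // j hj hne.
    apply/negP => hsj; move/negP: hne; apply.
    by apply/eqP; apply: (@special_uniq _ _ _ _ hmu (hb _ hj) (hb _ hj0)).
  move=> /hasPn hno; exists 1%N; first by rewrite mem_iota; lia.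
  by move=> j hj _; apply: hno.
rewrite (@prod_eq H mulH oneH invH hH a mu gam bet j0 (iota 1 n) hsp).
rewrite -hI hsum //.
by move: hj0; rewrite mem_iota; lia.
Qed.
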